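(* Let $(\Omega,T)$ be a minimal subshift over a finite alphabet such that no word in $L_5(\Omega)$ has repeated letters. Then for every $w,v\in L(\Omega)$, every $i,j\in\mathbb Z$ and every cylinder partition $C$ of $(w,i)$, the following hold in $G_T'$: $$\left(\sigma_{(w,i)}\right)^3=1,\qquad \left(\sigma_{(w,i)}\,\sigma_{(w,i+1)}\right)^2=1,\qquad \sigma_{(w,i+1)}=\sigma_{(w,i)}\ast\sigma_{(w,i+2)},\qquad \sigma_{(w,i)}=\prod_{(s,k)\in C}\sigma_{(s,k)},$$ and $[\sigma_{(w,i)},\sigma_{(v,j)}]=1$ whenever $(w,i)$ and $(v,j)$ are $3$-disjoint.
   Context: $T$ is the left shift $(T\omega)_m=\omega_{m+1}$ on $A^{\mathbb Z}$, $A$ finite; a minimal subshift is a closed shift-invariant $\Omega\subseteq A^{\mathbb Z}$ with every orbit dense. Words are indexed from $0$; $L_m(\Omega)$ is the set of words of length $m$ occurring in sequences of $\Omega$, $L(\Omega)=\bigcup_mL_m(\Omega)$. For a word $v$ and $i\in\mathbb Z$, $(v,i)=\{\omega\in\Omega:\omega_{k-i}=v_k,\ 0\leq k\leq|v|-1\}$. A cylinder partition of $(w,i)$ is a finite family of cylinder sets $(s,k)$ that are pairwise disjoint with union $(w,i)$. For a clopen $U$ with $U,TU,T^2U$ pairwise disjoint, $\sigma_U(\omega)=T\omega$ on $U\cup TU$, $\sigma_U(\omega)=T^{-2}\omega$ on $T^2U$, $\sigma_U(\omega)=\omega$ elsewhere; $\sigma_{(w,i)}:=\sigma_U$ with $U=(w,i)$.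 $G_T$ is the group of homeomorphisms $S$ of $\Omega$ with $S(x)=T^{f_S(x)}x$ for a continuous $f_S:\Omega\to\mathbb Z$, and $G_T'$ its commutator subgroup (which contains all $\sigma_U$). For group elements $r,s$, $r\ast s:=s\,r^{-1}s^{-1}r$. Clopen sets $U,V$ are $3$-disjoint if $(U\cup TU\cup T^2U)\cap(V\cup TV\cup T^2V)=\emptyset$. *)

(* Defs.v *)
From Stdlib Require Import ZArith ClassicalEpsilon.
From Stdlib Require List.
From mathcomp Require Import all_boot.
Set Implicit Arguments. Unset Strict Implicit. Unset Printing Implicit Defensive.

Open Scope Z_scope.

Section Subshift.
Variable A : finType.

Definition config := Z -> A.
Definition cset := config -> Prop.

Definition shiftn (n : Z) (w : config) : config := fun m => w (m + n).
Definition T (w : config) : config := shiftn 1 w.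

Definition imgT (U : cset) : cset := fun x => exists y, U y /\ x = T y.

Definition agree_on (n : Z) (w w' : config) : Prop :=
  forall m, - n <= m <= n -> w m = w' m.

(* closed in the product topology (= contains all limit points) *)
Definition closed_set (Om : cset) : Prop :=
  forall w, (forall n, exists w', Om w' /\ agree_on n w' w) -> Om w.

Definition shift_invariant (Om : cset) : Prop :=
  forall w, Om w <-> Om (T w).

(* every orbit {T^k w | k in Z} is dense in Om (basic opens = cylinders) *)
Definition orbits_dense (Om : cset) : Prop :=
  forall w w', Om w -> Om w' -> forall n, exists k, agree_on n (shiftn k w) w'.

Definition minimal_subshift (Om : cset) : Prop :=
  [/\ closed_set Om, shift_invariant Om & orbits_dense Om].

Definition occurs_at (v : seq A) (w : config) (m : Z) : Prop :=
  v = [seq w (m + Z.of_nat k) | k <- iota 0 (size v)].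

Definition lang (Om : cset) (v : seq A) : Prop :=
  exists w m, Om w /\ occurs_at v w m.
Definition lang_n (Om : cset) (n : nat) (v : seq A) : Prop :=
  lang Om v /\ size v = n.

(* cylinder (v,i) = { w in Om : w_(k-i) = v_k, 0 <= k <= |v|-1 } *)
Definition cyl (Om : cset) (v : seq A) (i : Z) : cset :=
  fun w => Om w /\ occurs_at v w (- i).

Definition sigma (U : cset) (w : config) : config :=
  if excluded_middle_informative (U w \/ imgT U w) then T w
  else if excluded_middle_informative (imgT (imgT U) w) then shiftn (-2) w
  else w.

Definition sigma_cyl (Om : cset) (v : seq A) (i : Z) : config -> config :=
  sigma (cyl Om v i).

Definition three_disjoint (U V : cset) : Prop :=
  forall w, (U w \/ imgT U w \/ imgT (imgT U) w) ->
            ~ (V w \/ imgT V w \/ imgT (imgT V) w).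

Definition cyl_partition (Om : cset) (C : seq (seq A * Z)) (v : seq A) (i : Z)
  : Prop :=
  (forall p q, (p < q < size C)%nat ->
     forall d x, ~ (cyl Om (nth d C p).1 (nth d C p).2 x /\
                    cyl Om (nth d C q).1 (nth d C q).2 x)) /\
  (forall x, cyl Om v i x <-> exists c, List.In c C /\ cyl Om c.1 c.2 x).

(* product (composition, leftmost factor applied last) of the sigma_(s,k) *)
Definition sigma_prod (Om : cset) (C : seq (seq A * Z)) : config -> config :=
  foldr (fun c f => fun x => sigma_cyl Om c.1 c.2 (f x)) id C.

Definition inverse_on (Om : cset) (f g : config -> config) : Prop :=
  forall x, Om x -> [/\ Om (g x), f (g x) = x & g (f x) = x].

End Subshift.

(* Main.v *)
Require Import Defs.
From Stdlib Require Import ZArith ClassicalEpsilon.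
From Stdlib Require List.
From mathcomp Require Import all_boot.
From Stdlib Require Import Lia FunctionalExtensionality Classical.
Open Scope Z_scope.
Set Implicit Arguments.
Lemma shiftn_add (A : finType) a b (x : config A) : shiftn a (shiftn b x) = shiftn (a + b) x.
Proof. apply functional_extensionality => m. rewrite /shiftn. f_equal. lia. Qed.
Lemma shiftn0 (A : finType) (x : config A) : shiftn 0 x = x.
Proof. apply functional_extensionality => m. by rewrite /shiftn Z.add_0_r. Qed.
Lemma shiftn_eq (A:finType) (x : config A) a b : a = b -> shiftn a x = shiftn b x.
Proof. by move->. Qed.

Lemma Om_shift (A : finType) (Om : cset A) : shift_invariant Om ->
  forall n x, Om (shiftn n x) <-> Om x.
Proof.
move=> Hinv n; elim/Z.peano_ind: n => [|n IHn|n IHn] x.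
- by rewrite shiftn0.
- have -> : shiftn (Z.succ n) x = T (shiftn n x).
    rewrite /T shiftn_add; apply shiftn_eq; lia.
  have := Hinv (shiftn n x); have := IHn x; tauto.
- have E : shiftn n x = T (shiftn (Z.pred n) x).
    rewrite /T shiftn_add; apply shiftn_eq; lia.
  have := Hinv (shiftn (Z.pred n) x); have := IHn x; rewrite E; tauto.
Qed.

Lemma occurs_shift (A:finType) (v : seq A) x n m :
  occurs_at v (shiftn n x) m <-> occurs_at v x (m + n).
Proof.
rewrite /occurs_at; split => H; rewrite [LHS]H; apply eq_map => k /=;
 rewrite /shiftn; f_equal; lia.
Qed.

Lemma cyl_shift (A:finType) (Om : cset A) : shift_invariant Om -> forall w k n x,
  cyl Om w k (shiftn n x) <-> cyl Om w (k - n) x.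
Proof.
move=> Hinv w k n x; rewrite /cyl.
have H1 := Om_shift Hinv n x. have H2 := occurs_shift w x n (-k).
have -> : - (k - n) = -k + n by lia.
tauto.
Qed.

Lemma imgT_cyl (A:finType) (Om : cset A) : shift_invariant Om -> forall w k z,
  imgT (cyl Om w k) z <-> cyl Om w (k+1) z.
Proof.
move=> Hinv w k z; split.
- case=> y [Hy ->]. apply (proj2 (cyl_shift Hinv w (k+1) 1 y)).
  by have ->: k+1-1 = k by lia.
- move=> Hz. exists (shiftn (-1) z). split.
  + apply (proj2 (cyl_shift Hinv w k (-1) z)). by have ->: k - -1 = k+1 by lia.
  + rewrite /T shiftn_add. have ->: 1 + -1 = 0 by lia. by rewrite shiftn0.
Qed.

Lemma imgT_ext (A:finType) (P Q : cset A) z : (forall z, P z <-> Q z) -> imgT P z <-> imgT Q z.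
Proof. move=> H; split; case=> y [Hy ->]; exists y; split => //; by apply/H. Qed.

Lemma imgT2_cyl (A:finType) (Om : cset A) : shift_invariant Om -> forall w k z,
  imgT (imgT (cyl Om w k)) z <-> cyl Om w (k+2) z.
Proof.
move=> Hinv w k z.
have H1 := @imgT_ext _ _ _ z (imgT_cyl Hinv w k).
have H2 := imgT_cyl Hinv w (k+1) z.
have -> : k + 2 = k + 1 + 1 by lia. tauto.
Qed.

Lemma sc01 (A:finType) (Om : cset A) : shift_invariant Om -> forall w k z,
  cyl Om w k z \/ cyl Om w (k+1) z -> sigma_cyl Om w k z = shiftn 1 z.
Proof.
move=> Hinv w k z H; rewrite /sigma_cyl /sigma.
destruct (excluded_middle_informative (cyl Om w k z \/ imgT (cyl Om w k) z)) as [Hc|n]; first done.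
exfalso; apply n. have := imgT_cyl Hinv w k z. tauto.
Qed.

Lemma sc2 (A:finType) (Om : cset A) : shift_invariant Om -> forall w k z,
  cyl Om w (k+2) z -> ~ cyl Om w k z -> ~ cyl Om w (k+1) z ->
  sigma_cyl Om w k z = shiftn (-2) z.
Proof.
move=> Hinv w k z H2 H0 H1; rewrite /sigma_cyl /sigma.
have := imgT_cyl Hinv w k z; have := imgT2_cyl Hinv w k z => E2 E1.
destruct (excluded_middle_informative (cyl Om w k z \/ imgT (cyl Om w k) z)) as [F|Hc]; first by exfalso; tauto.
destruct (excluded_middle_informative (imgT (imgT (cyl Om w k)) z)) as [Hd|F]; first done. exfalso; tauto.
Qed.

Lemma scN (A:finType) (Om : cset A) : shift_invariant Om -> forall w k z,
  ~ cyl Om w k z -> ~ cyl Om w (k+1) z -> ~ cyl Om w (k+2) z ->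
  sigma_cyl Om w k z = z.
Proof.
move=> Hinv w k z H0 H1 H2; rewrite /sigma_cyl /sigma.
have := imgT_cyl Hinv w k z; have := imgT2_cyl Hinv w k z => E2 E1.
destruct (excluded_middle_informative (cyl Om w k z \/ imgT (cyl Om w k) z)) as [F|Hc]; first by exfalso; tauto.
destruct (excluded_middle_informative (imgT (imgT (cyl Om w k)) z)) as [F|Hd]; first by exfalso; tauto. done.
Qed.

Lemma cyl_head (A:finType) (Om:cset A) w0 w k x : cyl Om (w0::w) k x -> x (-k) = w0.
Proof. case=> _ H. case: H => E _. rewrite E; f_equal; lia. Qed.

Lemma window (A : finType) (Om : cset A) :
  (forall u : seq A, lang_n Om 5 u -> uniq u) ->
  forall w a b x, w <> [::] -> cyl Om w a x -> cyl Om w b x -> a <> b -> -4 <= a - b <= 4 -> False.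
Proof.
move=> HL [//|w0 w] a b x _ Ha Hb Hab Hd.
have Ea := cyl_head Ha. have Eb := cyl_head Hb.
set m := Z.min (-a) (-b).
set u := [seq x (m + Z.of_nat k) | k <- iota 0 5].
have su : size u = 5%N by rewrite size_map size_iota.
have Hu : uniq u.
  apply HL; split; last by [].
  exists x, m; split; first by case: Ha.
  by rewrite /occurs_at su.
have nthu : forall p, (p < 5)%N -> nth (x 0) u p = x (m + Z.of_nat p).
  move=> p Hp. by rewrite /u (nth_map 0%N) ?size_iota // nth_iota.
have Hpa : (Z.to_nat (-a - m) < 5)%N by apply/ltP; lia.
have Hpb : (Z.to_nat (-b - m) < 5)%N by apply/ltP; lia.
have Hpa' : (Z.to_nat (-a - m) < size u)%N by rewrite su.
have Hpb' : (Z.to_nat (-b - m) < size u)%N by rewrite su.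
have := nth_uniq (x 0) Hpa' Hpb' Hu. rewrite !nthu //.
have -> : m + Z.of_nat (Z.to_nat (- a - m)) = -a by lia.
have -> : m + Z.of_nat (Z.to_nat (- b - m)) = -b by lia.
rewrite Ea Eb eqxx => /esym/eqP. lia.
Qed.
Lemma cyl_in (A:finType) (Om:cset A) (Hinv: shift_invariant Om) {w i m x K q} :
  cyl Om w (i+m) x -> K - q = i + m -> cyl Om w K (shiftn q x).
Proof. move=> H E. apply (proj2 (cyl_shift Hinv w K q x)). by rewrite E. Qed.

Lemma cyl_out (A:finType) (Om:cset A) (Hinv: shift_invariant Om)
  (HL : forall u : seq A, lang_n Om 5 u -> uniq u) {w i m x K q} :
  w <> [::] -> cyl Om w (i+m) x -> K - q <> i + m -> -4 <= K - q - (i+m) <= 4 ->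
  ~ cyl Om w K (shiftn q x).
Proof. move=> Hw H E D C. have C' := proj1 (cyl_shift Hinv w K q x) C. exact: (window HL Hw C' H E D). Qed.

Lemma stepA (A:finType) (Om:cset A) (Hinv: shift_invariant Om)
  (HL : forall u : seq A, lang_n Om 5 u -> uniq u) {w i m x} (Hw : w <> [::])
  (Hm : cyl Om w (i+m) x) k q :
  (i + m + q - k = 0 \/ i + m + q - k = 1) ->
  sigma_cyl Om w k (shiftn q x) = shiftn (q+1) x.
Proof.
move=> D. rewrite (sc01 Hinv); last first.
  case: D => D; [left|right]; apply: (cyl_in Hinv Hm); lia.
rewrite shiftn_add; apply shiftn_eq; lia.
Qed.

Lemma stepB (A:finType) (Om:cset A) (Hinv: shift_invariant Om)
  (HL : forall u : seq A, lang_n Om 5 u -> uniq u) {w i m x} (Hw : w <> [::])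
  (Hm : cyl Om w (i+m) x) k q :
  i + m + q - k = 2 ->
  sigma_cyl Om w k (shiftn q x) = shiftn (q-2) x.
Proof.
move=> D. rewrite (sc2 Hinv).
- rewrite shiftn_add; apply shiftn_eq; lia.
- apply: (cyl_in Hinv Hm); lia.
- apply: (cyl_out Hinv HL Hw Hm); lia.
- apply: (cyl_out Hinv HL Hw Hm); lia.
Qed.

Lemma stepC (A:finType) (Om:cset A) (Hinv: shift_invariant Om)
  (HL : forall u : seq A, lang_n Om 5 u -> uniq u) {w i m x} (Hw : w <> [::])
  (Hm : cyl Om w (i+m) x) k q :
  (i + m + q - k = -2 \/ i + m + q - k = -1 \/ i + m + q - k = 3 \/ i + m + q - k = 4) ->
  sigma_cyl Om w k (shiftn q x) = shiftn q x.
Proof.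
move=> D. rewrite (scN Hinv) //; apply: (cyl_out Hinv HL Hw Hm); lia.
Qed.

Lemma stepN (A:finType) (Om:cset A) (Hinv: shift_invariant Om) {w i x lo hi} :
  (forall e, lo <= e <= hi -> ~ cyl Om w (i+e) x) -> forall k,
  lo <= k - i -> k - i + 2 <= hi -> sigma_cyl Om w k x = x.
Proof.
move=> Hn k H1 H2. rewrite (scN Hinv) //.
- have := Hn (k - i); rewrite (_ : i + (k - i) = k); [|lia]. move=> X; apply X; lia.
- have := Hn (k + 1 - i); rewrite (_ : i + (k + 1 - i) = k + 1); [|lia]. move=> X; apply X; lia.
- have := Hn (k + 2 - i); rewrite (_ : i + (k + 2 - i) = k + 2); [|lia]. move=> X; apply X; lia.
Qed.

Ltac stepit Hinv HL Hw Hm :=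
  repeat first
   [ rewrite (stepA Hinv HL Hw Hm); last by lia
   | rewrite (stepB Hinv HL Hw Hm); last by lia
   | rewrite (stepC Hinv HL Hw Hm); last by lia ];
  apply shiftn_eq; lia.

Ltac stepn Hinv Hn := repeat (rewrite (stepN Hinv Hn); [|lia|lia]); reflexivity.

Lemma cases5 (A:finType) (Om:cset A) w i x lo hi (P : Prop) :
  (forall m, lo <= m <= hi -> cyl Om w (i+m) x -> P) ->
  ((forall e, lo <= e <= hi -> ~ cyl Om w (i+e) x) -> P) -> P.
Proof.
move=> H1 H2. case: (classic (exists m, lo <= m <= hi /\ cyl Om w (i+m) x)).
- case=> m [Hr Hm]; exact: H1 Hm.
- move=> Hn; apply H2 => e He C; apply Hn; exists e; auto.
Qed.

Lemma cube (A:finType) (Om:cset A) (Hinv: shift_invariant Om)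
  (HL : forall u : seq A, lang_n Om 5 u -> uniq u) w (Hw : w <> [::]) k x :
  sigma_cyl Om w k (sigma_cyl Om w k (sigma_cyl Om w k x)) = x.
Proof.
apply: (@cases5 _ Om w k x 0 2).
- move=> m Hr Hm.
  suff: sigma_cyl Om w k (sigma_cyl Om w k (sigma_cyl Om w k (shiftn 0 x))) = shiftn 0 x
    by rewrite shiftn0.
  have: m = 0 \/ m = 1 \/ m = 2 by lia.
  case=> [E|[E|E]]; subst m; stepit Hinv HL Hw Hm.
- move=> Hn. stepn Hinv Hn.
Qed.

Lemma claim2 (A:finType) (Om:cset A) (Hinv: shift_invariant Om)
  (HL : forall u : seq A, lang_n Om 5 u -> uniq u) w (Hw : w <> [::]) i x :
  sigma_cyl Om w i (sigma_cyl Om w (i + 1)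
         (sigma_cyl Om w i (sigma_cyl Om w (i + 1) x))) = x.
Proof.
apply: (@cases5 _ Om w i x 0 3).
- move=> m Hr Hm.
  suff: sigma_cyl Om w i (sigma_cyl Om w (i + 1)
         (sigma_cyl Om w i (sigma_cyl Om w (i + 1) (shiftn 0 x)))) = shiftn 0 x
    by rewrite shiftn0.
  have: m = 0 \/ m = 1 \/ m = 2 \/ m = 3 by lia.
  case=> [E|[E|[E|E]]]; subst m; stepit Hinv HL Hw Hm.
- move=> Hn. stepn Hinv Hn.
Qed.

Lemma sigma_Om (A:finType) (Om:cset A) (Hinv: shift_invariant Om) U x :
  Om x -> Om (sigma U x).
Proof.
move=> Hx; rewrite /sigma.
destruct (excluded_middle_informative (U x \/ imgT U x)) as [H1|H1].
- by apply (proj1 (Hinv x)).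
- destruct (excluded_middle_informative (imgT (imgT U) x)) as [H2|H2] => //.
  by apply (proj2 (Om_shift Hinv _ _)).
Qed.

Lemma inv_sig (A:finType) (Om:cset A) f g : inverse_on Om f g ->
 (forall x, Om x -> f (f (f x)) = x) -> (forall x, Om x -> Om (f x)) ->
 forall y, Om y -> g y = f (f y).
Proof.
move=> Hi H3 Hf y Hy. rewrite -{1}(H3 y Hy).
by have [_ _ ->] := Hi (f (f y)) (Hf _ (Hf _ Hy)).
Qed.

Lemma claim3 (A:finType) (Om:cset A) (Hinv: shift_invariant Om)
  (HL : forall u : seq A, lang_n Om 5 u -> uniq u) w (Hw : w <> [::]) i
  (rinv sinv : config A -> config A) :
       inverse_on Om (sigma_cyl Om w i) rinv ->
       inverse_on Om (sigma_cyl Om w (i + 2)) sinv ->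
       forall x, Om x ->
         sigma_cyl Om w (i + 1) x =
         sigma_cyl Om w (i + 2) (rinv (sinv (sigma_cyl Om w i x))).
Proof.
move=> Hr Hs x Hx.
have Om1 : forall k y, Om y -> Om (sigma_cyl Om w k y) by move=> k y; apply sigma_Om.
rewrite (inv_sig Hs (fun y _ => cube Hinv HL Hw _ y) (Om1 _)); last by apply Om1.
rewrite (inv_sig Hr (fun y _ => cube Hinv HL Hw _ y) (Om1 _)); last by do 3 apply Om1.
apply: (@cases5 _ Om w i x 0 4).
- move=> m Hrg Hm.
  rewrite -(shiftn0 x).
  have: m = 0 \/ m = 1 \/ m = 2 \/ m = 3 \/ m = 4 by lia.
  case=> [E|[E|[E|[E|E]]]]; subst m; stepit Hinv HL Hw Hm.
- move=> Hn. stepn Hinv Hn.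
Qed.
Definition supp (A:finType) (U : cset A) z := U z \/ imgT U z \/ imgT (imgT U) z.

Lemma sig_supp (A:finType) (U : cset A) z : supp U z -> supp U (sigma U z).
Proof.
move=> H; rewrite /sigma.
destruct (excluded_middle_informative (U z \/ imgT U z)) as [H1|H1].
- by case: H1 => H1; right; [left|right]; exists z.
- destruct (excluded_middle_informative (imgT (imgT U) z)) as [H2|H2] => //.
  cbn [is_left]. left. case: H2 => z1 [[y [Hy ->]] ->].
  have -> : shiftn (-2) (T (T y)) = y.
    rewrite /T !shiftn_add -{2}(shiftn0 y). apply shiftn_eq; lia.
  done.
Qed.

Lemma sig_out (A:finType) (U : cset A) z : ~ supp U z -> sigma U z = z.
Proof.
move=> H; rewrite /sigma.
destruct (excluded_middle_informative (U z \/ imgT U z)) as [H1|H1].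
- exfalso; apply H; rewrite /supp; tauto.
- destruct (excluded_middle_informative (imgT (imgT U) z)) as [H2|H2] => //.
  exfalso; apply H; rewrite /supp; tauto.
Qed.

Lemma claim5 (A:finType) (U V : cset A) x : three_disjoint U V ->
  sigma U (sigma V x) = sigma V (sigma U x).
Proof.
move=> HD.
case: (classic (supp U x)) => HU.
- have nV : ~ supp V x := HD x HU.
  have nV' : ~ supp V (sigma U x) := HD _ (sig_supp HU).
  by rewrite (sig_out nV) (sig_out nV').
- case: (classic (supp V x)) => HV.
  + have nU : ~ supp U (sigma V x) := fun H => HD _ H (sig_supp HV).
    by rewrite (sig_out HU) (sig_out nU).
  + by rewrite (sig_out HU) (sig_out HV) (sig_out HU).
Qed.

Lemma nth_In (T0:Type) (d0 : T0) C q : (q < size C)%N -> List.In (nth d0 C q) C.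
Proof. elim: C q => [|c C IH] [|q] //= H; [left|right; apply IH] => //. Qed.

Lemma In_nth (T0:Type) (d0:T0) C c : List.In c C -> exists p, (p < size C)%N /\ nth d0 C p = c.
Proof.
elim: C => [|c' C IH] //= [->|H]; first by exists 0%N.
case: (IH H) => p [Hp E]. by exists p.+1.
Qed.

Lemma prod_cons (A:finType)(Om:cset A) c C x :
  sigma_prod Om (c :: C) x = sigma_cyl Om c.1 c.2 (sigma_prod Om C x).
Proof. by []. Qed.

Lemma prod_fix (A:finType)(Om:cset A) C z (d0 : seq A * Z) :
  (forall q, (q < size C)%N -> sigma_cyl Om (nth d0 C q).1 (nth d0 C q).2 z = z) ->
  sigma_prod Om C z = z.
Proof.
elim: C => [|c C IH] H //. rewrite prod_cons IH.
- exact: (H 0%N).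
- move=> q Hq. exact: (H q.+1).
Qed.

Lemma prod_single (A:finType)(Om:cset A) C (d0 : seq A * Z) x p : (p < size C)%N ->
 (forall q, (q < size C)%N -> q <> p ->
    sigma_cyl Om (nth d0 C q).1 (nth d0 C q).2 x = x /\
    sigma_cyl Om (nth d0 C q).1 (nth d0 C q).2
       (sigma_cyl Om (nth d0 C p).1 (nth d0 C p).2 x) =
    sigma_cyl Om (nth d0 C p).1 (nth d0 C p).2 x) ->
 sigma_prod Om C x = sigma_cyl Om (nth d0 C p).1 (nth d0 C p).2 x.
Proof.
elim: C p => [|c C IH] [|p] // Hp H; rewrite prod_cons /=.
- rewrite (@prod_fix _ _ _ _ d0) //. move=> q Hq. exact: (proj1 (H q.+1 Hq _)).
- rewrite (IH p) //.
  + exact: (proj2 (H 0%N _ _)).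
  + move=> q Hq Hqp. apply: (H q.+1 Hq). by case.
Qed.

Lemma cyl_sh2 (A:finType) (Om:cset A) (Hinv: shift_invariant Om) {s K K' q x} :
  cyl Om s K x -> K + q = K' -> cyl Om s K' (shiftn q x).
Proof.
move=> H E. apply (proj2 (cyl_shift Hinv _ _ _ _)).
by rewrite (_ : K' - q = K); [|lia].
Qed.

Lemma claim4 (A:finType) (Om:cset A) (Hinv: shift_invariant Om)
  (HL : forall u : seq A, lang_n Om 5 u -> uniq u) w (Hw : w <> [::]) i C
  (HP : cyl_partition Om C w i) x :
  sigma_cyl Om w i x = sigma_prod Om C x.
Proof.
pose d0 : seq A * Z := ([::], 0).
case: HP => Hdis Hcov.
have piece : forall q e z, (q < size C)%N ->
    cyl Om (nth d0 C q).1 ((nth d0 C q).2 + e) z -> cyl Om w (i + e) z.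
  move=> q e z Hq H.
  have H1 : cyl Om (nth d0 C q).1 (nth d0 C q).2 (shiftn (-e) z).
    apply: (cyl_sh2 Hinv H); lia.
  have H2 : cyl Om w i (shiftn (-e) z) :=
    proj2 (Hcov _) (ex_intro _ (nth d0 C q) (conj (@nth_In _ d0 C q Hq) H1)).
  apply (proj1 (cyl_shift Hinv _ _ _ _)) in H2.
  by rewrite (_ : i + e = i - - e); [|lia].
have Hfix : forall p q z n0, (p < size C)%N -> (q < size C)%N -> q <> p ->
    0 <= n0 <= 2 -> cyl Om (nth d0 C p).1 ((nth d0 C p).2 + n0) z ->
    sigma_cyl Om (nth d0 C q).1 (nth d0 C q).2 z = z.
  move=> p q z n0 Hp Hq Hqp Hn0 Hc.
  have Hw0 := piece p n0 z Hp Hc.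
  have NC : forall e, 0 <= e <= 2 -> ~ cyl Om (nth d0 C q).1 ((nth d0 C q).2 + e) z.
    move=> e He Hc'. have Hwe := piece q e z Hq Hc'.
    case: (Z.eq_dec e n0) => [E|E].
    - subst e.
      have Ap : cyl Om (nth d0 C p).1 (nth d0 C p).2 (shiftn (-n0) z).
        apply: (cyl_sh2 Hinv Hc); lia.
      have Aq : cyl Om (nth d0 C q).1 (nth d0 C q).2 (shiftn (-n0) z).
        apply: (cyl_sh2 Hinv Hc'); lia.
      case: (ltngtP p q) => [lt|lt|eq].
      + apply: (Hdis p q _ d0 (shiftn (-n0) z)); last by split.
        by rewrite lt Hq.
      + apply: (Hdis q p _ d0 (shiftn (-n0) z)); last by split.
        by rewrite lt Hp.
      + by apply Hqp.
    - apply: (window HL Hw Hwe Hw0); lia.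
  rewrite (scN Hinv) //.
  - have := NC 0; rewrite Z.add_0_r; apply; lia.
  - apply NC; lia.
  - apply NC; lia.
apply: (@cases5 _ Om w i x 0 2).
- move=> n Hr Hn.
  have Hy : cyl Om w i (shiftn (-n) x) by apply: (cyl_sh2 Hinv Hn); lia.
  case: (proj1 (Hcov _) Hy) => c [Hin Hc].
  case: (@In_nth _ d0 C c Hin) => p [Hp Ep]. rewrite -Ep in Hc.
  have Hc' : cyl Om (nth d0 C p).1 ((nth d0 C p).2 + n) x.
    have := cyl_sh2 Hinv (q:=n) (K':= (nth d0 C p).2 + n) Hc.
    rewrite shiftn_add (_ : n + - n = 0); [|lia]. rewrite shiftn0. apply; lia.
  have: n = 0 \/ n = 1 \/ n = 2 by lia.
  case=> [E|[E|E]]; subst n.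
  + have E1 : sigma_cyl Om (nth d0 C p).1 (nth d0 C p).2 x = shiftn 1 x.
      apply (sc01 Hinv); left; by rewrite Z.add_0_r in Hc'.
    rewrite (sc01 Hinv); last by left; rewrite Z.add_0_r in Hn.
    rewrite (@prod_single _ Om C d0 x p) // ?E1 //.
    move=> q Hq Hqp. split.
    * apply: (Hfix p q x 0) => //; first [lia | apply: (cyl_sh2 Hinv Hc'); lia].
    * apply: (Hfix p q (shiftn 1 x) 1) => //; first [lia | apply: (cyl_sh2 Hinv Hc'); lia].
  + have E1 : sigma_cyl Om (nth d0 C p).1 (nth d0 C p).2 x = shiftn 1 x.
      apply (sc01 Hinv); by right.
    rewrite (sc01 Hinv); last by right.
    rewrite (@prod_single _ Om C d0 x p) // ?E1 //.
    move=> q Hq Hqp. split.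
    * apply: (Hfix p q x 1) => //; first [lia | apply: (cyl_sh2 Hinv Hc'); lia].
    * apply: (Hfix p q (shiftn 1 x) 2) => //; first [lia | apply: (cyl_sh2 Hinv Hc'); lia].
  + have E1 : sigma_cyl Om (nth d0 C p).1 (nth d0 C p).2 x = shiftn (-2) x.
      apply (sc2 Hinv) => // Hc0.
      * have := piece p 0 x Hp; rewrite Z.add_0_r => /(_ Hc0) H0.
        apply: (window HL Hw H0 Hn); lia.
      * have H0 := piece p 1 x Hp Hc0.
        apply: (window HL Hw H0 Hn); lia.
    rewrite (sc2 Hinv) //; last first.
      * move=> H0; apply: (window HL Hw H0 Hn); lia.
      * move=> H0; rewrite -(Z.add_0_r i) in H0; apply: (window HL Hw H0 Hn); lia.
    rewrite (@prod_single _ Om C d0 x p) // ?E1 //.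
    move=> q Hq Hqp. split.
    * apply: (Hfix p q x 2) => //; first [lia | apply: (cyl_sh2 Hinv Hc'); lia].
    * apply: (Hfix p q (shiftn (-2) x) 0) => //; first [lia | apply: (cyl_sh2 Hinv Hc'); lia].
- move=> Hn. rewrite (stepN Hinv Hn); [|lia|lia].
  symmetry; apply (@prod_fix _ _ _ _ d0) => q Hq.
  rewrite (scN Hinv) // => Hc.
  + have := piece q 0 x Hq; rewrite Z.add_0_r => /(_ Hc). apply: (Hn 0 _); lia.
  + have := piece q 1 x Hq Hc. apply: (Hn 1 _); lia.
  + have := piece q 2 x Hq Hc. apply: (Hn 2 _); lia.
Qed.

Unset Implicit Arguments.

Theorem corollary3p6 (A : finType) (Om : cset A) :
  minimal_subshift Om ->
  (forall u : seq A, lang_n Om 5 u -> uniq u) ->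
  forall (w v : seq A) (i j : Z),
    lang Om w -> w <> [::] -> lang Om v -> v <> [::] ->
    (* sigma_(w,i)^3 = 1 *)
    (forall x, Om x ->
       sigma_cyl Om w i (sigma_cyl Om w i (sigma_cyl Om w i x)) = x) /\
    (* (sigma_(w,i) sigma_(w,i+1))^2 = 1 *)
    (forall x, Om x ->
       sigma_cyl Om w i (sigma_cyl Om w (i + 1)
         (sigma_cyl Om w i (sigma_cyl Om w (i + 1) x))) = x) /\
    (* sigma_(w,i+1) = sigma_(w,i) * sigma_(w,i+2) = s r^-1 s^-1 r *)
    (forall rinv sinv : config A -> config A,
       inverse_on Om (sigma_cyl Om w i) rinv ->
       inverse_on Om (sigma_cyl Om w (i + 2)) sinv ->
       forall x, Om x ->
         sigma_cyl Om w (i + 1) x =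
         sigma_cyl Om w (i + 2) (rinv (sinv (sigma_cyl Om w i x)))) /\
    (* sigma_(w,i) = prod_{(s,k) in C} sigma_(s,k) *)
    (forall C : seq (seq A * Z), cyl_partition Om C w i ->
       forall x, Om x -> sigma_cyl Om w i x = sigma_prod Om C x) /\
    (* [sigma_(w,i), sigma_(v,j)] = 1 when 3-disjoint *)
    (three_disjoint (cyl Om w i) (cyl Om v j) ->
       forall x, Om x ->
         sigma_cyl Om w i (sigma_cyl Om v j x) =
         sigma_cyl Om v j (sigma_cyl Om w i x)).
Proof.
move=> [Hcl Hinv Hden] HL w v i j Lw Hw Lv Hv.
split; [|split; [|split; [|split]]].
- move=> x _; exact: (cube Hinv HL Hw i x).
- move=> x _; exact: (claim2 Hinv HL Hw i x).
- exact: (claim3 Hinv HL Hw).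
- move=> C HP x _; exact: (claim4 Hinv HL Hw HP x).
- move=> HD x _; exact: (claim5 x HD).
Qed.
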